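(* Let $P$ be a rectangular box (brick) in $\mathbb{R}^3$ of volume $1$, all of whose edge lengths are at least $\frac{1}{\sqrt{2}}$. Let $e_1,e_2,e_3$ be three pairwise skew edges of $P$, and let $A\in e_1$, $B\in e_2$, $C\in e_3$ be the vertices of a regular (equilateral) triangle. Then the side length of the triangle $ABC$ is at most $\sqrt{2}$.
   Context: A brick is a rectangular parallelepiped (box with pairwise orthogonal edge directions). Edges of the brick are its twelve closed edge segments. Three edges are pairwise skew if no two of them are parallel and no two intersect; in a brick such a triple consists of one edge from each of the three edge directions. ''The vertices of a triangle lie on the skew edges of the brick'' means each vertex lies on a different edge of such a triple. *)

(* Defs.v *)
From HB Require Import structures.
From mathcomp Require Import all_boot all_order all_algebra.
From mathcomp Require Import reals.
Set Implicit Arguments. Unset Strict Implicit. Unset Printing Implicit Defensive.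
Import Order.TTheory GRing.Theory Num.Theory.
Local Open Scope ring_scope.

Definition dot (R : realType) (x y : 'rV[R]_3) : R := \sum_(i < 3) x 0 i * y 0 i.

Definition enorm (R : realType) (x : 'rV[R]_3) : R := Num.sqrt (dot x x).
Definition dist (R : realType) (x y : 'rV[R]_3) : R := enorm (x - y).

(* A brick is given by a vertex O and three pairwise orthogonal nonzero edge
   vectors f 0, f 1, f 2; it is { O + sum_j t_j f j | t_j in [0,1] }. *)
Definition is_brick (R : realType) (f : 'I_3 -> 'rV[R]_3) : Prop :=
  (forall i, f i != 0) /\ (forall i j, i != j -> dot (f i) (f j) = 0).

Definition brick_volume (R : realType) (f : 'I_3 -> 'rV[R]_3) : R :=
  \prod_(i < 3) enorm (f i).

(* The edge of the brick in direction i, whose other coordinates (in the frame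
   f, relative to O) are given by the bits b j, j != i (b i is irrelevant). *)
Definition brick_edge (R : realType) (O : 'rV[R]_3) (f : 'I_3 -> 'rV[R]_3)
    (i : 'I_3) (b : 'I_3 -> bool) : 'rV[R]_3 -> Prop :=
  fun P => exists l : R, 0 <= l <= 1 /\
    P = O + \sum_(j < 3 | j != i) (b j)%:R *: f j + l *: f i.

Definition meets (R : realType) (E F : 'rV[R]_3 -> Prop) : Prop :=
  exists P, E P /\ F P.

(* Main.v *)
Require Import Defs.
From HB Require Import structures.
From mathcomp Require Import all_boot all_order all_algebra.
From mathcomp Require Import reals.
From mathcomp Require Import ring lra.
Import Order.TTheory GRing.Theory Num.Theory.
Local Open Scope ring_scope.

Module Aux.
Set Implicit Arguments. Unset Strict Implicit.
Section S.
Variable R : realType.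
Implicit Types A B C : R.

Lemma c3_B1 A B C : 1/2 <= A -> 1/2 <= B -> 1/2 <= C -> A*B*C = 1 -> 2 <= A + B -> 2 < B + C -> 1 <= B.
Proof.
move=> hA hB hC hp h1 h2; rewrite leNgt; apply/negP => hB1.
have k1 : 0 <= (A-(2-B))*C by apply: mulr_ge0; lra.
have k2 : 0 < (2-B)*(C-(2-B)) by apply: mulr_gt0; lra.
have k3 : 0 < B*(A*C-(2-B)*(2-B)) by apply: mulr_gt0; lra.
have k4 : 0 <= (1-B)*(-(B^+2-3*B+1)) by apply: mulr_ge0; nra.
nra.
Qed.

Lemma c3_lo A B : 1 <= B -> B <= 3/2 -> 2 - B <= A -> 0 <= 1 - A*(B*(2-B)) ->
  0 <= 8*A*B - 4 - A*(A+B)^+2.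
Proof.
move=> h1 h2 h3 h4.
set D := B*(2-B).
have e : D^+2*(3*B-B^+2-1)*(8*A*B - 4 - A*(A+B)^+2) =
  4*(3-2*B)*D^+2*(1 - A*D) + (1+B-B^+2)*(2*B*D+(1+B*D))*(A-(2-B)) +
  (3*B-B^+2-1)*(A-(2-B))*(1-A*D)*(D*A+2*B*D+(2-B)*D+1) by rewrite /D; ring.
have hD : 0 < D by rewrite /D; apply: mulr_gt0; lra.
have hq : 0 < 3*B-B^+2-1 by nra.
have hp : 0 < D^+2*(3*B-B^+2-1) by apply: mulr_gt0; [apply: exprn_gt0|].
have t1 : 0 <= 4*(3-2*B)*D^+2*(1 - A*D).
  apply: mulr_ge0; last by rewrite /D. apply: mulr_ge0; [lra| exact: sqr_ge0].
have t2 : 0 <= (1+B-B^+2)*(2*B*D+(1+B*D))*(A-(2-B)).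
  apply: mulr_ge0; last lra. apply: mulr_ge0; first nra.
  have : 0 <= B*D by apply: mulr_ge0; lra. nra.
have t3 : 0 <= (3*B-B^+2-1)*(A-(2-B))*(1-A*D)*(D*A+2*B*D+(2-B)*D+1).
  apply: mulr_ge0; last first.
    have : 0 <= D*A by apply: mulr_ge0; lra.
    have : 0 <= B*D by apply: mulr_ge0; lra.
    have : 0 <= (2-B)*D by apply: mulr_ge0; lra. lra.
  apply: mulr_ge0; last by rewrite /D.
  apply: mulr_ge0; lra.
have : 0 <= D^+2*(3*B-B^+2-1)*(8*A*B - 4 - A*(A+B)^+2) by rewrite e; lra.
by rewrite pmulr_rge0.
Qed.


Lemma c3_hi A B : 3/2 <= B -> 1/2 <= A -> A*B <= 2 -> 0 <= 8*A*B - 4 - A*(A+B)^+2.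
Proof.
move=> h1 h2 h3.
have hB4 : B <= 4 by nra.
have [hW|hW] := ltrP B 4; last first.
  have eB : B = 4 by lra. have eA : A = 1/2 by subst B; lra.
  by subst A B; lra.
have e : 8*B^+2*(4-B)*(8*A*B - 4 - A*(A+B)^+2) =
  2*B^+2*(2*B-3)*(11-2*B)*(2-A*B) + 32*(-(B^+4 - 6*B^+3 + 4*B^+2 + 4))*(A-1/2)
  + (4-B)*(A-1/2)*(2-A*B)*(8*A*B + 16*B^+2 + 4*B + 16) by field.
have hG : 0 <= -(B^+4 - 6*B^+3 + 4*B^+2 + 4).
  have : 0 <= (B-3/2)*(4-B) by apply: mulr_ge0; lra.
  nra.
have t1 : 0 <= 2*B^+2*(2*B-3)*(11-2*B)*(2-A*B).
  apply: mulr_ge0; last lra. apply: mulr_ge0; last lra.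
  apply: mulr_ge0; last lra. apply: mulr_ge0; [lra|exact: sqr_ge0].
have t2 : 0 <= 32*(-(B^+4 - 6*B^+3 + 4*B^+2 + 4))*(A-1/2).
  apply: mulr_ge0; last lra. apply: mulr_ge0; lra.
have t3 : 0 <= (4-B)*(A-1/2)*(2-A*B)*(8*A*B + 16*B^+2 + 4*B + 16).
  apply: mulr_ge0; last by nra.
  apply: mulr_ge0; last lra. apply: mulr_ge0; lra.
have hp : 0 < 8*B^+2*(4-B) by apply: mulr_gt0; [apply: mulr_gt0; [lra|apply: exprn_gt0; lra]|lra].
have : 0 <= 8*B^+2*(4-B)*(8*A*B - 4 - A*(A+B)^+2) by rewrite e; lra.
by rewrite pmulr_rge0.
Qed.

Lemma c3 A B C : 1/2 <= A -> 1/2 <= B -> 1/2 <= C -> A*B*C = 1 -> 2 <= A + B -> C < 2 -> 2 < B + C ->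
  (A+B)^+2 <= 4*B*(2-C).
Proof.
move=> hA hB hC hp h1 h2 h3.
have hB1 := c3_B1 hA hB hC hp h1 h3.
have hF : 0 <= 8*A*B - 4 - A*(A+B)^+2.
  have [hl|hl] := lerP B (3/2).
    apply: c3_lo => //; first lra.
    have : 0 < A*B*(C-(2-B)) by apply: mulr_gt0; [apply: mulr_gt0|]; lra.
    nra.
  apply: c3_hi => //; first lra.
  have : 0 <= A*B*(C-1/2) by apply: mulr_ge0; [apply: mulr_ge0|]; lra.
  nra.
have e : A*(4*B*(2-C) - (A+B)^+2) = 8*A*B - 4 - A*(A+B)^+2.
  have -> : 8*A*B - 4 = 8*A*B - 4*(A*B*C) by rewrite hp; ring.
  ring.
have : 0 <= A*(4*B*(2-C) - (A+B)^+2) by rewrite e.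
rewrite pmulr_rge0; last lra. lra.
Qed.

Lemma case1 A B C : 1/2 <= A -> 1/2 <= B -> A*B*C = 1 -> 2 <= C -> 2 <= A + B -> False.
Proof.
move=> hA hB hp hC h.
have k1 : 0 <= (A-1/2)*(B-1/2) by apply: mulr_ge0; lra.
have k2 : 0 <= (A*B)*(C-2) by apply: mulr_ge0; [apply: mulr_ge0|]; lra.
nra.
Qed.

Lemma c2 A B : 1/2 <= A -> 1/2 <= B -> A*B <= 1/2 -> 1 <= 4*A*B*(2-A-B).
Proof. move=> hA hB h. have hA1 : A <= 1 by nra. have hB1 : B <= 1 by nra. nra. Qed.

Lemma g1 A B C : 1/2 <= A -> 1/2 <= B -> A*B*C = 1 -> B <= 1 -> 2 < B + C -> C < 2 ->
  (C-1)^+2 <= C*(2-A-B).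
Proof.
move=> hA hB hp hB1 h1 h2.
have k1 : 0 <= B*((C-2+B)*(2-C)) by apply: mulr_ge0; [lra|apply: mulr_ge0; lra].
have k2 : 0 <= (2*B-1)*(1-B) by apply: mulr_ge0; lra.
have e : B*(C*(2-A-B) - (C-1)^+2) = 4*B*C - 1 - B^+2*C - B*C^+2 - B.
  have -> : 4*B*C - 1 = 4*B*C - A*B*C by rewrite hp.
  ring.
have : 0 <= B*(C*(2-A-B) - (C-1)^+2) by rewrite e; nra.
rewrite pmulr_rge0; last lra. lra.
Qed.

Lemma g3 A B C : 1/2 <= A -> A*B*C = 1 -> 1 <= B -> A + B < 2 ->
  1 <= B*(2-C)+C*(2-A-B)+2*(2-C)*(2-A-B).
Proof.
move=> hA hp hB1 h1.
have hB2 : B <= 3/2 by lra.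
have hAB : 0 < A*B by apply: mulr_gt0; lra.
have hC : 0 < C by nra.
have k1p : 0 < B*(2-B)*C - 1.
  have : 0 < B*C*(2-A-B) by apply: mulr_gt0; [apply: mulr_gt0|]; lra. nra.
have k2p : 0 <= 2 - B*C.
  have : 0 <= B*C*(A-1/2) by apply: mulr_ge0; [apply: mulr_ge0|]; lra. nra.
have k1 : 0 <= (B*(2-B)*C - 1)*(2-B*C) by apply: mulr_ge0; lra.
have k2 : 0 <= ((B-1)*(2-B))*(B*(2-B)*C - 1) by apply: mulr_ge0; [apply: mulr_ge0|]; lra.
have k3 : 0 <= (B*(B-1))*(2-B*C) by apply: mulr_ge0; [apply: mulr_ge0|]; lra.
have hD : 0 < B*(2-B) by apply: mulr_gt0; lra.
have H : 0 <= 7*B*C - 2*B^+2*C - 2*B*C^+2 - 4 + C.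
  have : 0 <= B*(2-B)*(7*B*C - 2*B^+2*C - 2*B*C^+2 - 4 + C) by nra.
  by rewrite pmulr_rge0.
have e : B*C*(B*(2-C)+C*(2-A-B)+2*(2-C)*(2-A-B) - 1) = 7*B*C - 2*B^+2*C - 2*B*C^+2 - 4 + C.
  have -> : 7*B*C - 2*B^+2*C - 2*B*C^+2 - 4 + C = 7*B*C - 2*B^+2*C - 2*B*C^+2 - 4*(A*B*C) + C*(A*B*C) by rewrite hp; ring.
  ring.
have : 0 <= B*C*(B*(2-C)+C*(2-A-B)+2*(2-C)*(2-A-B) - 1) by rewrite e.
rewrite pmulr_rge0; last by apply: mulr_gt0; lra.
lra.
Qed.


End S.

Section S.
Variable R : realType.
Implicit Types A B C Y Z x y : R.

Lemma sqrt_facts x : 0 <= x -> 0 <= Num.sqrt x /\ Num.sqrt x ^+ 2 = x.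
Proof. move=> hx; split; [exact: sqrtr_ge0 | exact: sqr_sqrtr]. Qed.

Lemma sq_lt x y : 0 <= x -> 0 <= y -> x^+2 < y^+2 -> x < y.
Proof. move=> hx hy h; rewrite ltNge; apply/negP => hyx. nra. Qed.

Lemma sq_le x y : 0 <= y -> x^+2 <= y^+2 -> x <= y.
Proof. move=> hy h; rewrite leNgt; apply/negP => hyx. nra. Qed.

Lemma sq_lt2 x y : 0 <= x -> x < y -> x^+2 < y^+2.
Proof. move=> hx h. nra. Qed.

Lemma sq01 Y : 0 <= Y -> Y <= 1 -> Y^+2 <= 1.
Proof. move=> h0 h1. nra. Qed.

Lemma mul_le1 B Y : 0 <= B -> Y^+2 <= 1 -> B*Y^+2 <= B.
Proof. move=> h0 h1. nra. Qed.

Lemma ab_half A B C : 0 <= A -> 0 <= B -> A*B*C = 1 -> 2 <= C -> A*B <= 1/2.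
Proof. move=> hA hB hp hC. have : 0 <= A*B by apply: mulr_ge0. nra. Qed.

Lemma c_ge1 A B C : 1/2 <= A -> 1/2 <= B -> A*B*C = 1 -> A + B < 2 -> 1 <= C.
Proof. move=> hA hB hp h. have k1 : 0 <= (A-B)^+2 by apply: sqr_ge0.
have k2 : 0 < (2-(A+B))*(2+(A+B)) by apply: mulr_gt0; lra.
have hABl : A*B < 1 by nra.
have : 0 <= A*B by apply: mulr_ge0; lra. nra. Qed.

Lemma C4_le A B C : A*B*C = 1 -> 0 < C -> 1 <= 4*A*B*(2-A-B) -> C <= 4*(2-A-B).
Proof. move=> hp hC k.
have : C*1 <= C*(4*A*B*(2-A-B)) by rewrite ler_pM2l.
have -> : C*(4*A*B*(2-A-B)) = 4*(A*B*C)*(2-A-B) by ring.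
rewrite hp. lra. Qed.

Lemma I0 A B C Y Z : 1/2 <= A -> 1/2 <= B -> 1/2 <= C -> A*B*C = 1 ->
  0 <= Y -> Y <= 1 -> 0 <= Z -> Z <= 1 ->
  2 < B*Y^+2 + C -> 2 < A + B*(1-Y)^+2 + C*Z^+2 -> 2 < A + B + C*(1-Z)^+2 -> False.
Proof.
move=> hA hB hC hp hY0 hY1 hZ0 hZ1 h1 h2 h3.
have hnn1 : 0 <= B by lra.
have [hb0 hb2] := sqrt_facts hnn1.
have hnn2 : 0 <= C by lra.
have [hc0 hc2] := sqrt_facts hnn2.
set b := Num.sqrt B in hb0 hb2. set c := Num.sqrt C in hc0 hc2.
have eY : B*Y^+2 = (b*Y)^+2 by rewrite exprMn hb2.
have eY' : B*(1-Y)^+2 = (b*(1-Y))^+2 by rewrite exprMn hb2.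
have eZ : C*Z^+2 = (c*Z)^+2 by rewrite exprMn hc2.
have eZ' : C*(1-Z)^+2 = (c*(1-Z))^+2 by rewrite exprMn hc2.
have bY0 : 0 <= b*Y by apply: mulr_ge0.
have bY1 : 0 <= b*(1-Y) by apply: mulr_ge0; lra.
have cZ0 : 0 <= c*Z by apply: mulr_ge0.
have cZ1 : 0 <= c*(1-Z) by apply: mulr_ge0; lra.
have hY2 : Y^+2 <= 1 by apply: sq01.
have hY2' : (1-Y)^+2 <= 1 by apply: sq01; lra.
have hZ2 : Z^+2 <= 1 by apply: sq01.
have hBY : B*Y^+2 <= B by apply: mul_le1; lra.
have hBY' : B*(1-Y)^+2 <= B by apply: mul_le1; lra.
have hCZ : C*Z^+2 <= C by apply: mul_le1; lra.
have hBC : 2 < B + C by lra.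
have [hC2|hC2] := lerP 2 C.
- have [hAB|hAB] := lerP 2 (A+B).
    exact: (case1 hA hB hp hC2 hAB).
  have hnn3 : 0 <= 2-A-B by lra.
  have [hs0 hs2] := sqrt_facts hnn3.
  set s := Num.sqrt (2-A-B) in hs0 hs2.
  have hAB2 : A*B <= 1/2 by apply: (ab_half _ _ hp); lra.
  have k := c2 hA hB hAB2.
  have hC4 : C <= 4*(2-A-B) by apply: C4_le => //; lra.
  have hc2s : c <= 2*s by apply: sq_le; [lra| rewrite hc2 exprMn hs2; lra].
  have hw : s < c*(1-Z) by apply: sq_lt => //; rewrite hs2 -eZ'; lra.
  have ecZ : c*Z = c - c*(1-Z) by ring.
  have hcZ : c*Z < s by rewrite ecZ; lra.
  have : (c*Z)^+2 < s^+2 by apply: sq_lt2.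
  rewrite -eZ hs2. lra.
- have [hAB|hAB] := lerP 2 (A+B).
  + have hnn4 : 0 <= 2-C by lra.
 have [hs0 hs2] := sqrt_facts hnn4.
    set s := Num.sqrt (2-C) in hs0 hs2.
    have hbY : s < b*Y by apply: sq_lt => //; rewrite hs2 -eY; lra.
    have k := c3 hA hB hC hp hAB hC2 hBC.
    have hk : A + B <= 2*b*s by apply: sq_le; [apply: mulr_ge0; [apply: mulr_ge0|]; lra|
      rewrite !exprMn hb2 hs2; lra].
    have ebY : b*(1-Y) = b - b*Y by ring.
    have hb1 : b*(1-Y) < b - s by rewrite ebY; lra.
    have : (b*(1-Y))^+2 < (b-s)^+2 by apply: sq_lt2.
    rewrite -eY'. have -> : (b-s)^+2 = b^+2 + s^+2 - 2*b*s by ring.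
    rewrite hb2 hs2. lra.
  + have hnn5 : 0 <= 2-C by lra.
 have [hs0 hs2] := sqrt_facts hnn5.
    set s := Num.sqrt (2-C) in hs0 hs2.
    have hnn6 : 0 <= 2-A-B by lra.
    have [ht0 ht2] := sqrt_facts hnn6.
    set t := Num.sqrt (2-A-B) in ht0 ht2.
    have hbY : s < b*Y by apply: sq_lt => //; rewrite hs2 -eY; lra.
    have hw : t < c*(1-Z) by apply: sq_lt => //; rewrite ht2 -eZ'; lra.
    have ebY : b*(1-Y) = b - b*Y by ring.
    have hb1 : b*(1-Y) < b - s by rewrite ebY; lra.
    have ecZ : c*Z = c - c*(1-Z) by ring.
    have hcZ : c*Z < c - t by rewrite ecZ; lra.
    have k1 : (b*(1-Y))^+2 < (b-s)^+2 by apply: sq_lt2.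
    have k2 : (c*Z)^+2 < (c-t)^+2 by apply: sq_lt2.
    have hsum : b*s + c*t < 1.
      move: k1 k2; rewrite -eY' -eZ.
      have -> : (b-s)^+2 = b^+2 + s^+2 - 2*(b*s) by ring.
      have -> : (c-t)^+2 = c^+2 + t^+2 - 2*(c*t) by ring.
      rewrite hb2 hs2 hc2 ht2. lra.
    have hbs : s <= b by lra.
    have hct : t <= c by lra.
    have u1 : s^+2 <= b*s by rewrite expr2; apply: ler_wpM2r.
    have v1 : t^+2 <= c*t by rewrite expr2; apply: ler_wpM2r.
    have [hB1|hB1] := lerP B 1.
    * have g := g1 hA hB hp hB1 hBC hC2.
      have hC1 : 1 <= C by apply: (c_ge1 hA hB hp).
      have hv : C - 1 <= c*t.
        apply: sq_le; first by apply: mulr_ge0.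
        by rewrite exprMn hc2 ht2.
      rewrite hs2 in u1. lra.
    * have g := g3 hA hp (ltW hB1) hAB.
      have huv : 1 <= b*s + c*t.
        apply: sq_le; first by apply: addr_ge0; apply: mulr_ge0.
        rewrite expr1n.
        have -> : (b*s + c*t)^+2 = b^+2*s^+2 + c^+2*t^+2 + 2*((b*s)*(c*t)) by ring.
        rewrite hb2 hs2 hc2 ht2.
        rewrite hs2 in u1. rewrite ht2 in v1.
        have : (2-C)*(2-A-B) <= (b*s)*(c*t).
          apply: ler_pM; lra.
        lra.
      lra.
Qed.

End S.

Section S.
Variable R : realType.
Implicit Types A B C x y z t : R.

Lemma lt2_eq a b : a = b -> 2 < a -> (2:R) < b.
Proof. by move=> ->. Qed.

Definition hyp3 A B C := [/\ 1/2 <= A, 1/2 <= B, 1/2 <= C & A*B*C = 1].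

Lemma I0' A B C Y Z : hyp3 A B C -> 0 <= Y -> Y <= 1 -> 0 <= Z -> Z <= 1 ->
  2 < B*Y^+2 + C -> 2 < A + B*(1-Y)^+2 + C*Z^+2 -> 2 < A + B + C*(1-Z)^+2 -> False.
Proof. by case=> *; apply: (@I0 R A B C Y Z). Qed.

Lemma hyp3_perm A B C : hyp3 A B C -> [/\ hyp3 A C B, hyp3 B A C, hyp3 B C A, hyp3 C A B & hyp3 C B A].
Proof. case=> h1 h2 h3 h4; split; split => //; rewrite -h4; ring. Qed.

Ltac tac3 h1 h2 h3 := first [ lra | by apply: (lt2_eq _ h1); ring | by apply: (lt2_eq _ h2); ring | by apply: (lt2_eq _ h3); ring ].

Lemma face A B C x y z : hyp3 A B C -> 0 <= x -> x <= 1 -> 0 <= y -> y <= 1 -> 0 <= z -> z <= 1 ->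
  2 < A*x^+2 + B*y^+2 + C -> 2 < A + B*(1-y)^+2 + C*z^+2 -> 2 < A*(1-x)^+2 + B + C*(1-z)^+2 ->
  (x = 0 \/ x = 1 \/ y = 0 \/ y = 1 \/ z = 0 \/ z = 1) -> False.
Proof.
move=> H hx0 hx1 hy0 hy1 hz0 hz1 h1 h2 h3 hf.
have [P1 P2 P3 P4 P5] := hyp3_perm H.
case: hf => [ex|[ex|[ey|[ey|[ez|ez]]]]]; subst.
- apply: (@I0' A B C y z) => //; tac3 h1 h2 h3.
- apply: (@I0' A C B (1-z) (1-y)) => //; tac3 h1 h2 h3.
- apply: (@I0' B A C x (1-z)) => //; tac3 h1 h2 h3.
- apply: (@I0' B C A z (1-x)) => //; tac3 h1 h2 h3.
- apply: (@I0' C B A (1-y) x) => //; tac3 h1 h2 h3.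
- apply: (@I0' C A B (1-x) y) => //; tac3 h1 h2 h3.
Qed.

End S.

Section S.
Variable R : realType.
Implicit Types A B C x y z t : R.

Lemma pick3 (a b c : R) : exists t, [/\ t <= a, t <= b, t <= c & (t = a \/ t = b \/ t = c)].
Proof.
have [hab|hab] := lerP a b; have [hac|hac] := lerP a c; have [hbc|hbc] := lerP b c.
all: first [ by exists a; split => //; lra | by exists b; split => //; lra | by exists c; split => //; lra ].
Qed.

Lemma move_pos A B C x y z t : 0 < A -> 0 < B -> 0 < C ->
  0 <= x*(1-y)*(1-z) - (1-x)*y*z -> 0 <= t ->
  let x' := x + t*(B*C*y*z) in let y' := y - t*(A*C*x*z) in let z' := z - t*(A*B*x*(1-y)) in
  [/\ A*x^+2 + B*y^+2 + C <= A*x'^+2 + B*y'^+2 + C,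
      A + B*(1-y)^+2 + C*z^+2 <= A + B*(1-y')^+2 + C*z'^+2 &
      A*(1-x)^+2 + B + C*(1-z)^+2 <= A*(1-x')^+2 + B + C*(1-z')^+2].
Proof.
move=> hA hB hC hK ht x' y' z'.
have hABC : 0 <= A*B*C by apply: mulr_ge0; [apply: mulr_ge0|]; lra.
split.
- have e : A*x'^+2 + B*y'^+2 + C = (A*x^+2 + B*y^+2 + C) + t^+2*(A*(B*C*y*z)^+2 + B*(A*C*x*z)^+2) by rewrite /x' /y'; ring.
  rewrite e; apply: (ler_wpDr _ (lexx _)); apply: mulr_ge0; first exact: sqr_ge0.
  apply: addr_ge0; apply: mulr_ge0; try lra; exact: sqr_ge0.
- have e : A + B*(1-y')^+2 + C*z'^+2 = (A + B*(1-y)^+2 + C*z^+2) + t^+2*(B*(A*C*x*z)^+2 + C*(A*B*x*(1-y))^+2) by rewrite /z' /y'; ring.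
  rewrite e; apply: (ler_wpDr _ (lexx _)); apply: mulr_ge0; first exact: sqr_ge0.
  apply: addr_ge0; apply: mulr_ge0; try lra; exact: sqr_ge0.
- have e : A*(1-x')^+2 + B + C*(1-z')^+2 = (A*(1-x)^+2 + B + C*(1-z)^+2) + (2*t*((A*B*C)*(x*(1-y)*(1-z) - (1-x)*y*z)) + t^+2*(A*(B*C*y*z)^+2 + C*(A*B*x*(1-y))^+2)) by rewrite /z' /x'; ring.
  rewrite e; apply: (ler_wpDr _ (lexx _)); apply: addr_ge0.
  + apply: mulr_ge0; first lra. exact: mulr_ge0.
  + apply: mulr_ge0; first exact: sqr_ge0.
    apply: addr_ge0; apply: mulr_ge0; try lra; exact: sqr_ge0.
Qed.

Lemma move_neg A B C x y z t : 0 < A -> 0 < B -> 0 < C ->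
  x*(1-y)*(1-z) - (1-x)*y*z <= 0 -> 0 <= t ->
  let x' := x - t*(B*C*y*z) in let y' := y + t*(A*C*x*z) in let z' := z + t*(A*B*x*(1-y)) in
  [/\ A*x^+2 + B*y^+2 + C <= A*x'^+2 + B*y'^+2 + C,
      A + B*(1-y)^+2 + C*z^+2 <= A + B*(1-y')^+2 + C*z'^+2 &
      A*(1-x)^+2 + B + C*(1-z)^+2 <= A*(1-x')^+2 + B + C*(1-z')^+2].
Proof.
move=> hA hB hC hK ht x' y' z'.
have hABC : 0 <= A*B*C by apply: mulr_ge0; [apply: mulr_ge0|]; lra.
split.
- have e : A*x'^+2 + B*y'^+2 + C = (A*x^+2 + B*y^+2 + C) + t^+2*(A*(B*C*y*z)^+2 + B*(A*C*x*z)^+2) by rewrite /x' /y'; ring.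
  rewrite e; apply: (ler_wpDr _ (lexx _)); apply: mulr_ge0; first exact: sqr_ge0.
  apply: addr_ge0; apply: mulr_ge0; try lra; exact: sqr_ge0.
- have e : A + B*(1-y')^+2 + C*z'^+2 = (A + B*(1-y)^+2 + C*z^+2) + t^+2*(B*(A*C*x*z)^+2 + C*(A*B*x*(1-y))^+2) by rewrite /z' /y'; ring.
  rewrite e; apply: (ler_wpDr _ (lexx _)); apply: mulr_ge0; first exact: sqr_ge0.
  apply: addr_ge0; apply: mulr_ge0; try lra; exact: sqr_ge0.
- have e : A*(1-x')^+2 + B + C*(1-z')^+2 = (A*(1-x)^+2 + B + C*(1-z)^+2) + (2*t*((A*B*C)*(-(x*(1-y)*(1-z) - (1-x)*y*z))) + t^+2*(A*(B*C*y*z)^+2 + C*(A*B*x*(1-y))^+2)) by rewrite /z' /x'; ring.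
  rewrite e; apply: (ler_wpDr _ (lexx _)); apply: addr_ge0.
  + apply: mulr_ge0; first lra. apply: mulr_ge0 => //; lra.
  + apply: mulr_ge0; first exact: sqr_ge0.
    apply: addr_ge0; apply: mulr_ge0; try lra; exact: sqr_ge0.
Qed.

Lemma nopoint A B C x y z : hyp3 A B C -> 0 <= x -> x <= 1 -> 0 <= y -> y <= 1 -> 0 <= z -> z <= 1 ->
  2 < A*x^+2 + B*y^+2 + C -> 2 < A + B*(1-y)^+2 + C*z^+2 -> 2 < A*(1-x)^+2 + B + C*(1-z)^+2 -> False.
Proof.
move=> H hx0 hx1 hy0 hy1 hz0 hz1 h1 h2 h3.
have HH := H. case: HH => hA hB hC hp.
have [x0|x0] := eqVneq x 0; first by apply: (face (x:=x) (y:=y) (z:=z) H) => //; left.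
have [x1|x1] := eqVneq x 1; first by apply: (face (x:=x) (y:=y) (z:=z) H) => //; right; left.
have [y0|y0] := eqVneq y 0; first by apply: (face (x:=x) (y:=y) (z:=z) H) => //; do 2 right; left.
have [y1|y1] := eqVneq y 1; first by apply: (face (x:=x) (y:=y) (z:=z) H) => //; do 3 right; left.
have [z0|z0] := eqVneq z 0; first by apply: (face (x:=x) (y:=y) (z:=z) H) => //; do 4 right; left.
have [z1|z1] := eqVneq z 1; first by apply: (face (x:=x) (y:=y) (z:=z) H) => //; do 5 right.
have hx0' : 0 < x by rewrite lt_def x0.
have hx1' : x < 1 by rewrite lt_def eq_sym x1.
have hy0' : 0 < y by rewrite lt_def y0.
have hy1' : y < 1 by rewrite lt_def eq_sym y1.
have hz0' : 0 < z by rewrite lt_def z0.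
have hz1' : z < 1 by rewrite lt_def eq_sym z1.
have hA' : 0 < A by lra. have hB' : 0 < B by lra. have hC' : 0 < C by lra.
have dx : 0 < B*C*y*z by do 3 (apply: mulr_gt0 => //).
have dy : 0 < A*C*x*z by do 3 (apply: mulr_gt0 => //).
have dz : 0 < A*B*x*(1-y) by apply: mulr_gt0; [do 2 (apply: mulr_gt0 => //)|lra].
set DX := B*C*y*z in dx. set DY := A*C*x*z in dy. set DZ := A*B*x*(1-y) in dz.
have [hK|hK] := lerP 0 (x*(1-y)*(1-z) - (1-x)*y*z).
- have [t [t1 t2 t3 te]] := pick3 ((1-x)/DX) (y/DY) (z/DZ).
  have ht : 0 <= t.
    case: te => [->|[->|->]]; apply: divr_ge0; lra.
  have [k1 k2 k3] := move_pos hA' hB' hC' hK ht.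
  rewrite -/DX -/DY -/DZ in k1 k2 k3.
  have f1 : t*DX <= 1-x by rewrite -ler_pdivlMr.
  have f2 : t*DY <= y by rewrite -ler_pdivlMr.
  have f3 : t*DZ <= z by rewrite -ler_pdivlMr.
  have g1 : 0 <= t*DX by apply: mulr_ge0; lra.
  have g2 : 0 <= t*DY by apply: mulr_ge0; lra.
  have g3 : 0 <= t*DZ by apply: mulr_ge0; lra.
  apply: (face (x := x + t*DX) (y := y - t*DY) (z := z - t*DZ) H); try lra.
  case: te => [te|[te|te]].
  + by right; left; rewrite te divfK ?gt_eqF //; ring.
  + by do 2 right; left; rewrite te divfK ?gt_eqF //; ring.
  + by do 4 right; left; rewrite te divfK ?gt_eqF //; ring.
- have [t [t1 t2 t3 te]] := pick3 (x/DX) ((1-y)/DY) ((1-z)/DZ).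
  have ht : 0 <= t.
    case: te => [->|[->|->]]; apply: divr_ge0; lra.
  have [k1 k2 k3] := move_neg hA' hB' hC' (ltW hK) ht.
  rewrite -/DX -/DY -/DZ in k1 k2 k3.
  have f1 : t*DX <= x by rewrite -ler_pdivlMr.
  have f2 : t*DY <= 1-y by rewrite -ler_pdivlMr.
  have f3 : t*DZ <= 1-z by rewrite -ler_pdivlMr.
  have g1 : 0 <= t*DX by apply: mulr_ge0; lra.
  have g2 : 0 <= t*DY by apply: mulr_ge0; lra.
  have g3 : 0 <= t*DZ by apply: mulr_ge0; lra.
  apply: (face (x := x - t*DX) (y := y + t*DY) (z := z + t*DZ) H); try lra.
  case: te => [te|[te|te]].
  + by left; rewrite te divfK ?gt_eqF //; ring.
  + by do 3 right; left; rewrite te divfK ?gt_eqF //; ring.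
  + by do 5 right; rewrite te divfK ?gt_eqF //; ring.
Qed.

End S.

Section S.
Variable R : realType.
Implicit Types A B C x y z S : R.

Lemma core A B C x y z S : hyp3 A B C -> 0 <= x -> x <= 1 -> 0 <= y -> y <= 1 -> 0 <= z -> z <= 1 ->
  A*x^+2 + B*y^+2 + C = S -> A + B*(1-y)^+2 + C*z^+2 = S -> A*(1-x)^+2 + B + C*(1-z)^+2 = S -> S <= 2.
Proof.
move=> H hx0 hx1 hy0 hy1 hz0 hz1 e1 e2 e3.
rewrite leNgt; apply/negP => hS.
apply: (nopoint (x:=x) (y:=y) (z:=z) H) => //; lra.
Qed.

End S.

Section S.
Variable R : realType.

Definition o0 : 'I_3 := ord0.
Definition o1 : 'I_3 := lift ord0 ord0.
Definition o2 : 'I_3 := lift ord0 (lift ord0 ord0).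

Lemma ord3P (i : 'I_3) : i = o0 \/ i = o1 \/ i = o2.
Proof.
case: i => [[|[|[|n]]] Hi].
- by left; apply/val_inj.
- by right; left; apply/val_inj.
- by right; right; apply/val_inj.
- by [].
Qed.

Lemma sum3 (g : 'I_3 -> R) : \sum_(k < 3) g k = g o0 + g o1 + g o2.
Proof. by rewrite !big_ord_recl big_ord0 addr0 addrA. Qed.

Lemma prod3 (g : 'I_3 -> R) : \prod_(k < 3) g k = g o0 * g o1 * g o2.
Proof. by rewrite !big_ord_recl big_ord0 mulr1 mulrA. Qed.

Lemma perm3 (P : 'I_3 -> 'I_3 -> 'I_3 -> Prop) :
  (forall i1 i2 i3, P i1 i2 i3 -> P i1 i3 i2) ->
  (forall i1 i2 i3, P i1 i2 i3 -> P i2 i1 i3) ->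
  P o0 o1 o2 ->
  forall i1 i2 i3, i1 != i2 -> i2 != i3 -> i1 != i3 -> P i1 i2 i3.
Proof.
move=> s23 s12 p i1 i2 i3.
case: (ord3P i1) => [->|[->|->]]; case: (ord3P i2) => [->|[->|->]]; case: (ord3P i3) => [->|[->|->]].
all: move=> h12 h23 h13; first [ by rewrite eqxx in h12 | by rewrite eqxx in h23 | by rewrite eqxx in h13 | exact p | apply: (s12); exact p | apply: (s23); exact p | apply: (s12); apply: (s12); exact p | apply: (s12); apply: (s23); exact p | apply: (s23); apply: (s12); exact p | apply: (s23); apply: (s23); exact p | apply: (s12); apply: (s12); apply: (s12); exact p | apply: (s12); apply: (s12); apply: (s23); exact p | apply: (s12); apply: (s23); apply: (s12); exact p | apply: (s12); apply: (s23); apply: (s23); exact p | apply: (s23); apply: (s12); apply: (s12); exact p | apply: (s23); apply: (s12); apply: (s23); exact p | apply: (s23); apply: (s23); apply: (s12); exact p | apply: (s23); apply: (s23); apply: (s23); exact p | apply: (s12); apply: (s12); apply: (s12); apply: (s12); exact p | apply: (s12); apply: (s12); apply: (s12); apply: (s23); exact p | apply: (s12); apply: (s12); apply: (s23); apply: (s12); exact p | apply: (s12); apply: (s12); apply: (s23); apply: (s23); exact p | apply: (s12); apply: (s23); apply: (s12); apply: (s12); exact p | apply: (s12); apply: (s23); apply: (s12); apply: (s23); exact p | apply: (s12); apply: (s23); apply: (s23); apply: (s12); exact p | apply: (s12); apply: (s23); apply: (s23); apply: (s23); exact p | apply: (s23); apply: (s12); apply: (s12); apply: (s12); exact p | apply: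 (s23); apply: (s12); apply: (s12); apply: (s23); exact p | apply: (s23); apply: (s12); apply: (s23); apply: (s12); exact p | apply: (s23); apply: (s12); apply: (s23); apply: (s23); exact p | apply: (s23); apply: (s23); apply: (s12); apply: (s12); exact p | apply: (s23); apply: (s23); apply: (s12); apply: (s23); exact p | apply: (s23); apply: (s23); apply: (s23); apply: (s12); exact p | apply: (s23); apply: (s23); apply: (s23); apply: (s23); exact p ].
Qed.

Lemma sum_perm (g : 'I_3 -> R) i1 i2 i3 : i1 != i2 -> i2 != i3 -> i1 != i3 ->
  \sum_(k < 3) g k = g i1 + g i2 + g i3.
Proof.
move: i1 i2 i3; apply: perm3.
- by move=> i1 i2 i3 ->; ring.
- by move=> i1 i2 i3 ->; ring.
- exact: sum3.
Qed.

Lemma prod_perm (g : 'I_3 -> R) i1 i2 i3 : i1 != i2 -> i2 != i3 -> i1 != i3 ->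
  \prod_(k < 3) g k = g i1 * g i2 * g i3.
Proof.
move: i1 i2 i3; apply: perm3.
- by move=> i1 i2 i3 ->; ring.
- by move=> i1 i2 i3 ->; ring.
- exact: prod3.
Qed.

Lemma third (k i1 i2 i3 : 'I_3) : i1 != i2 -> i2 != i3 -> i1 != i3 -> k != i1 -> k != i2 -> k = i3.
Proof.
case: (ord3P i1) => [->|[->|->]]; case: (ord3P i2) => [->|[->|->]]; case: (ord3P i3) => [->|[->|->]];
case: (ord3P k) => [->|[->|->]].
all: move=> h12 h23 h13 hk1 hk2; first [ reflexivity | by rewrite eqxx in h12 | by rewrite eqxx in h23 | by rewrite eqxx in h13 | by rewrite eqxx in hk1 | by rewrite eqxx in hk2 ].
Qed.

End S.

Section S.
Variable R : realType.

Lemma dot3 (u v : 'rV[R]_3) : dot u v = u 0 o0 * v 0 o0 + u 0 o1 * v 0 o1 + u 0 o2 * v 0 o2.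
Proof. by rewrite /dot sum3. Qed.

Lemma lincomb_entry (f : 'I_3 -> 'rV[R]_3) (c : 'I_3 -> R) i :
  (\sum_(k < 3) c k *: f k) 0 i = c o0 * f o0 0 i + c o1 * f o1 0 i + c o2 * f o2 0 i.
Proof. by rewrite summxE sum3 !mxE. Qed.

Lemma dot_lincomb (f : 'I_3 -> 'rV[R]_3) (c : 'I_3 -> R) :
  (forall i j, i != j -> dot (f i) (f j) = 0) ->
  dot (\sum_(k < 3) c k *: f k) (\sum_(k < 3) c k *: f k) =
  c o0 ^+ 2 * dot (f o0) (f o0) + c o1 ^+ 2 * dot (f o1) (f o1) + c o2 ^+ 2 * dot (f o2) (f o2).
Proof.
move=> orth.
have d01 := orth o0 o1 isT. have d02 := orth o0 o2 isT. have d12 := orth o1 o2 isT.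
rewrite !dot3 in d01 d02 d12 *.
rewrite !lincomb_entry.
have e01 : c o0 * c o1 * (f o0 0 o0 * f o1 0 o0 + f o0 0 o1 * f o1 0 o1 + f o0 0 o2 * f o1 0 o2) = 0 by rewrite d01 mulr0.
have e02 : c o0 * c o2 * (f o0 0 o0 * f o2 0 o0 + f o0 0 o1 * f o2 0 o1 + f o0 0 o2 * f o2 0 o2) = 0 by rewrite d02 mulr0.
have e12 : c o1 * c o2 * (f o1 0 o0 * f o2 0 o0 + f o1 0 o1 * f o2 0 o1 + f o1 0 o2 * f o2 0 o2) = 0 by rewrite d12 mulr0.
apply/eqP; rewrite -subr_eq0; apply/eqP.
rewrite -[RHS](_ : 2 * (c o0 * c o1 * (f o0 0 o0 * f o1 0 o0 + f o0 0 o1 * f o1 0 o1 + f o0 0 o2 * f o1 0 o2))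
   + 2 * (c o0 * c o2 * (f o0 0 o0 * f o2 0 o0 + f o0 0 o1 * f o2 0 o1 + f o0 0 o2 * f o2 0 o2))
   + 2 * (c o1 * c o2 * (f o1 0 o0 * f o2 0 o0 + f o1 0 o1 * f o2 0 o1 + f o1 0 o2 * f o2 0 o2)) = 0);
  last by rewrite e01 e02 e12; ring.
ring.
Qed.

Lemma edge_coord O (f : 'I_3 -> 'rV[R]_3) i b P : brick_edge O f i b P ->
  exists l : R, 0 <= l <= 1 /\ P = O + \sum_(k < 3) (if k == i then l else (b k)%:R) *: f k.
Proof.
case=> l [hl ->]; exists l; split => //.
rewrite [in RHS](bigD1 i) //= eqxx -addrA; congr (O + _).
rewrite addrC; congr (_ + _).
by apply: eq_bigr => k /negbTE ->.
Qed.

End S.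

Section S.
Variable R : realType.

Lemma edge_eq O (f : 'I_3 -> 'rV[R]_3) i (b : 'I_3 -> bool) (l : R) :
  O + \sum_(j < 3 | j != i) (b j)%:R *: f j + l *: f i =
  O + \sum_(k < 3) (if k == i then l else (b k)%:R) *: f k.
Proof.
rewrite [in RHS](bigD1 i) //= eqxx -addrA; congr (O + _).
rewrite addrC; congr (_ + _).
by apply: eq_bigr => k /negbTE ->.
Qed.

Lemma meet_of O (f : 'I_3 -> 'rV[R]_3) i1 i2 i3 (b1 b2 : 'I_3 -> bool) :
  i1 != i2 -> i2 != i3 -> i1 != i3 -> b1 i3 = b2 i3 ->
  meets (brick_edge O f i1 b1) (brick_edge O f i2 b2).
Proof.
move=> h12 h23 h13 hb.
have bit01 (u : bool) : 0 <= (u%:R : R) <= 1 by case: u => /=; rewrite ?ler01 ?lexx.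
exists (O + \sum_(j < 3 | j != i1) (b1 j)%:R *: f j + (b2 i1)%:R *: f i1); split.
  by exists (b2 i1)%:R; split.
exists (b1 i2)%:R; split => //.
rewrite !edge_eq; congr (O + _); apply: eq_bigr => k _.
have [k1|k1] := eqVneq k i1.
  by rewrite k1 (negbTE h12).
have [k2|k2] := eqVneq k i2.
  by rewrite k2.
by rewrite (third h12 h23 h13 k1 k2) hb.
Qed.

Lemma dot_ge0 (u : 'rV[R]_3) : 0 <= dot u u.
Proof. rewrite /dot; apply: sumr_ge0 => i _; rewrite -expr2; exact: sqr_ge0. Qed.

Lemma diff_lc O (f : 'I_3 -> 'rV[R]_3) (c d : 'I_3 -> R) :
  (O + \sum_(k < 3) c k *: f k) - (O + \sum_(k < 3) d k *: f k) = \sum_(k < 3) (c k - d k) *: f k.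
Proof.
rewrite opprD addrACA subrr add0r -sumrB; apply: eq_bigr => k _; by rewrite scalerBl.
Qed.

Lemma dist_sq O (f : 'I_3 -> 'rV[R]_3) (c d : 'I_3 -> R) i1 i2 i3 :
  (forall i j, i != j -> dot (f i) (f j) = 0) -> i1 != i2 -> i2 != i3 -> i1 != i3 ->
  (dist (O + \sum_(k < 3) c k *: f k) (O + \sum_(k < 3) d k *: f k)) ^+ 2 =
  (c i1 - d i1)^+2 * dot (f i1) (f i1) + (c i2 - d i2)^+2 * dot (f i2) (f i2)
  + (c i3 - d i3)^+2 * dot (f i3) (f i3).
Proof.
move=> orth h12 h23 h13.
rewrite /dist /enorm diff_lc sqr_sqrtr ?dot_ge0 // dot_lincomb //.
rewrite -(sum3 (fun k => (c k - d k)^+2 * dot (f k) (f k))).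
exact: sum_perm.
Qed.

Lemma sq_mono (a b : R) : 0 <= a -> a <= b -> a^+2 <= b^+2.
Proof. move=> h1 h2; nra. Qed.

Lemma sq_le' (a b : R) : 0 <= b -> a^+2 <= b^+2 -> a <= b.
Proof. move=> h1 h2; rewrite leNgt; apply/negP => h; nra. Qed.

Lemma bitfacts (u v : bool) (l : R) : u != v ->
  [/\ (l - (u%:R))^+2 = (if u then 1 - l else l)^+2,
      ((u%:R) - l)^+2 = (if u then 1 - l else l)^+2,
      ((v%:R) - l)^+2 = (1 - (if u then 1 - l else l))^+2,
      (l - (v%:R))^+2 = (1 - (if u then 1 - l else l))^+2 &
      ((u%:R) - (v%:R) : R)^+2 = 1 /\ ((v%:R) - (u%:R) : R)^+2 = 1].
Proof. by case: u; case: v => //= _; split; try split; ring. Qed.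

Lemma ifin (u : bool) (l : R) : 0 <= l <= 1 -> 0 <= (if u then 1 - l else l) <= 1.
Proof. by case: u => /= /andP [h1 h2]; apply/andP; split; lra. Qed.

End S.

End Aux.
Import Aux.

Theorem mainTheorem2 (R : realType) (O : 'rV[R]_3) (f : 'I_3 -> 'rV[R]_3)
    (i1 i2 i3 : 'I_3) (b1 b2 b3 : 'I_3 -> bool) (A B C : 'rV[R]_3) (s : R) :
  is_brick f ->
  brick_volume f = 1 ->
  (forall i, 1 / Num.sqrt 2 <= enorm (f i)) ->
  i1 != i2 -> i2 != i3 -> i1 != i3 ->
  ~ meets (brick_edge O f i1 b1) (brick_edge O f i2 b2) ->
  ~ meets (brick_edge O f i2 b2) (brick_edge O f i3 b3) ->
  ~ meets (brick_edge O f i1 b1) (brick_edge O f i3 b3) ->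
  brick_edge O f i1 b1 A -> brick_edge O f i2 b2 B -> brick_edge O f i3 b3 C ->
  0 < s -> dist A B = s -> dist B C = s -> dist C A = s ->
  s <= Num.sqrt 2.
Proof.
move=> [nz orth] hvol hlen h12 h23 h13 nm12 nm23 nm13 hA hB hC hs dAB dBC dCA.
have h21 : i2 != i1 by rewrite eq_sym.
have h32 : i3 != i2 by rewrite eq_sym.
have h31 : i3 != i1 by rewrite eq_sym.
have d3 : b2 i3 != b1 i3.
  apply/negP => /eqP e; apply: nm12; exact: (@meet_of R O f i1 i2 i3 b1 b2 h12 h23 h13 (esym e)).
have d1 : b2 i1 != b3 i1.
  apply/negP => /eqP e; apply: nm23; exact: (@meet_of R O f i2 i3 i1 b2 b3 h23 h31 h21 e).
have d2 : b1 i2 != b3 i2.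
  apply/negP => /eqP e; apply: nm13; exact: (@meet_of R O f i1 i3 i2 b1 b3 h13 h32 h12 e).
have [l1 [hl1 eA]] := edge_coord hA.
have [l2 [hl2 eB]] := edge_coord hB.
have [l3 [hl3 eC]] := edge_coord hC.
have n12 := negbTE h12. have n21 := negbTE h21. have n13 := negbTE h13.
have n31 := negbTE h31. have n23 := negbTE h23. have n32 := negbTE h32.
have sAB := dist_sq O (fun k => if k == i1 then l1 else (b1 k)%:R)
   (fun k => if k == i2 then l2 else (b2 k)%:R) orth h12 h23 h13.
have sBC := dist_sq O (fun k => if k == i2 then l2 else (b2 k)%:R)
   (fun k => if k == i3 then l3 else (b3 k)%:R) orth h12 h23 h13.
have sCA := dist_sq O (fun k => if k == i3 then l3 else (b3 k)%:R)
   (fun k => if k == i1 then l1 else (b1 k)%:R) orth h12 h23 h13.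
rewrite /= !eqxx n12 n21 n13 n31 n23 n32 -eA -eB -eC in sAB sBC sCA.
rewrite dAB in sAB. rewrite dBC in sBC. rewrite dCA in sCA.
have [x1 x2 x3 x4 [x5 x6]] := bitfacts l1 d1.
have [y1 y2 y3 y4 [y5 y6]] := bitfacts l2 d2.
have [z1 z2 z3 z4 [z5 z6]] := bitfacts l3 d3.
rewrite x1 y2 z6 in sAB. rewrite x5 y4 z2 in sBC. rewrite x3 y6 z4 in sCA.
set X := (if b2 i1 then 1 - l1 else l1) in sAB sBC sCA.
set Y := (if b1 i2 then 1 - l2 else l2) in sAB sBC sCA.
set Z := (if b2 i3 then 1 - l3 else l3) in sAB sBC sCA.
have hX : 0 <= X <= 1 by apply: ifin.
have hY : 0 <= Y <= 1 by apply: ifin.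
have hZ : 0 <= Z <= 1 by apply: ifin.
have Lge (k : 'I_3) : 1/2 <= dot (f k) (f k).
  have h := hlen k. rewrite /enorm in h.
  have h0 : 0 <= 1 / Num.sqrt (2:R) by apply: divr_ge0; [lra| exact: sqrtr_ge0].
  have := sq_mono h0 h. rewrite sqr_sqrtr ?dot_ge0 //.
  by rewrite expr_div_n expr1n sqr_sqrtr //; lra.
have hprod : dot (f i1) (f i1) * dot (f i2) (f i2) * dot (f i3) (f i3) = 1.
  rewrite -(prod_perm (fun k => dot (f k) (f k)) h12 h23 h13) prod3.
  move: hvol; rewrite /brick_volume prod3 /enorm -!sqrtrM ?dot_ge0 //; last first.
    by apply: mulr_ge0; apply: dot_ge0.
  move=> e. have := sqr_sqrtr (a := dot (f o0) (f o0) * dot (f o1) (f o1) * dot (f o2) (f o2)).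
  rewrite e expr1n => <- //.
  by apply: mulr_ge0; [apply: mulr_ge0|]; apply: dot_ge0.
have H : hyp3 (dot (f i1) (f i1)) (dot (f i2) (f i2)) (dot (f i3) (f i3)) by split.
case/andP: hX => hX0 hX1. case/andP: hY => hY0 hY1. case/andP: hZ => hZ0 hZ1.
have hS : s^+2 <= 2.
  apply: (core (x := X) (y := Y) (z := Z) H) => //.
  - by rewrite sAB; ring.
  - by rewrite sBC; ring.
  - by rewrite sCA; ring.
apply: sq_le'; first exact: sqrtr_ge0.
by rewrite sqr_sqrtr.
Qed.
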